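(* Let $\varphi(x)$ be a formula of the correspondence language with only $x$ free that is invariant with respect to $(2,2)$-modal asimulations. Then $\varphi(x)$ is logically equivalent to $ST_{22}(I,x)$ for some modal intuitionistic formula $I$.
   Context: Correspondence language: classical first-order logic without identity over $\Sigma=\{R,R_\Box,R_\Diamond,P_1,P_2,\dots\}$ ($R,R_\Box,R_\Diamond$ binary, $P_n$ unary). $\Theta$ is a subset of $\Sigma$ containing $R,R_\Box,R_\Diamond$; $\Theta$-models $M_k=\langle U_k,\iota_k\rangle$, with $R_k=\iota_k(R)$, $R_{\Box k}=\iota_k(R_\Box)$, $R_{\Diamond k}=\iota_k(R_\Diamond)$. $\Sigma_\varphi=\{R,R_\Box,R_\Diamond\}\cup\{P_n:P_n\text{ occurs in }\varphi\}$. $a\models_k\varphi(x)$ means $\varphi$ holds in $M_k$ under assignments sending $x$ to $a$. $s\overset{\leftrightarrow}{A}t$ means $sAt$ and $tAs$. Modal intuitionistic formulas: built from $p_n,\bot$ with $\wedge,\vee,\to,\Box,\Diamond$. $ST_{22}(p_n,x)=P_n(x)$, $ST_{22}(\bot,x)=\bot$, commutes with $\wedge,\vee$; $ST_{22}(I\to J,x)=\forall y(R(x,y)\to(ST_{22}(I,y)\to ST_{22}(J,y)))$; $ST_{22}(\Box I,x)=\forall y(R(x,y)\to\forall z(R_\Box(y,z)\to ST_{22}(I,z)))$; $ST_{22}(\Diamond I,x)=\forall y(R(x,y)\to\exists z(R_\Diamond(y,z)\wedge ST_{22}(I,z)))$. A $(2,2)$-modal $\langle(M_1,t),(M_2,u)\rangle$-asimulation,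 for pointed $\Theta$-models, is a pair $(A,B)$ with $A,B\subseteq(U_1\times U_2)\cup(U_2\times U_1)$ such that $tAu$ and, for all $i,j\in\{1,2\}$, $a,c,e\in U_i$, $b,d,f\in U_j$, unary $P\in\Theta$: if $aAb$ and $a\models_iP(x)$ then $b\models_jP(x)$; if $aAb$, $bR_jd$ then some $c\in U_i$ has $aR_ic$ and $c\overset{\leftrightarrow}{A}d$; if $aAb$, $bR_jd$, $dR_{\Box j}f$ then some $c,e\in U_i$ have $aR_ic$, $cR_{\Box i}e$, $eAf$; if $aAb$, $bR_jd$ then some $c\in U_i$ has $aR_ic$ and $cBd$; if $aBb$, $aR_{\Diamond i}c$ then some $d\in U_j$ has $bR_{\Diamond j}d$ and $cAd$. $\varphi(x)$ is invariant with respect to $(2,2)$-modal asimulations iff for every $\Theta\supseteq\Sigma_\varphi$, all pointed $\Theta$-models $(M_1,t),(M_2,u)$, every such $(A,B)$, and all $a\in U_1,b\in U_2$ with $aAb$: $a\models_1\varphi(x)$ implies $b\models_2\varphi(x)$. *)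

(* Defs.v *)
From Stdlib Require Import Arith List.

Definition var := nat.

Inductive fo : Type :=
| FR   : var -> var -> fo
| FRb  : var -> var -> fo
| FRd  : var -> var -> fo
| FP   : nat -> var -> fo
| FBot : fo
| FTop : fo
| FNot : fo -> fo
| FAnd : fo -> fo -> fo
| FOr  : fo -> fo -> fo
| FImp : fo -> fo -> fo
| FAll : var -> fo -> fo
| FEx  : var -> fo -> fo.

Fixpoint free_in (v : var) (f : fo) : Prop :=
  match f with
  | FR x y | FRb x y | FRd x y => v = x \/ v = y
  | FP _ x => v = x
  | FBot | FTop => False
  | FNot g => free_in v g
  | FAnd g h | FOr g h | FImp g h => free_in v g \/ free_in v h
  | FAll y g | FEx y g => v <> y /\ free_in v g
  end.

(* P_n occurs in f  (so Sigma_f = {R,R_Box,R_Dia} u {P_n : occurs_P n f}) *)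
Fixpoint occurs_P (n : nat) (f : fo) : Prop :=
  match f with
  | FP m _ => n = m
  | FR _ _ | FRb _ _ | FRd _ _ | FBot | FTop => False
  | FNot g => occurs_P n g
  | FAnd g h | FOr g h | FImp g h => occurs_P n g \/ occurs_P n h
  | FAll _ g | FEx _ g => occurs_P n g
  end.

(* Sigma-structures (nonempty domain, as in classical first-order logic). *)
Record model : Type := Model {
  U   : Type;
  pt  : U;
  iR  : U -> U -> Prop;
  iRb : U -> U -> Prop;
  iRd : U -> U -> Prop;
  iP  : nat -> U -> Prop }.

Definition update {M : model} (g : var -> U M) (v : var) (a : U M) : var -> U M :=
  fun w => if Nat.eqb w v then a else g w.

Fixpoint sat (M : model) (g : var -> U M) (f : fo) : Prop :=
  match f with
  | FR x y => iR M (g x) (g y)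
  | FRb x y => iRb M (g x) (g y)
  | FRd x y => iRd M (g x) (g y)
  | FP n x => iP M n (g x)
  | FBot => False
  | FTop => True
  | FNot h => ~ sat M g h
  | FAnd h k => sat M g h /\ sat M g k
  | FOr h k => sat M g h \/ sat M g k
  | FImp h k => sat M g h -> sat M g k
  | FAll y h => forall a : U M, sat M (update g y a) h
  | FEx y h => exists a : U M, sat M (update g y a) h
  end.

Definition holds_at (M : model) (f : fo) (x : var) (a : U M) : Prop :=
  forall g : var -> U M, g x = a -> sat M g f.

Inductive mi : Type :=
| MVar : nat -> mi
| MBot : mi
| MAnd : mi -> mi -> mi
| MOr  : mi -> mi -> mi
| MImp : mi -> mi -> mi
| MBox : mi -> mi
| MDia : mi -> mi.

(* Standard translation ST_22; bound variables y := x+1, z := x+2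
   (ST(I,v) has only v free, so no capture can occur). *)
Fixpoint ST22 (I : mi) (x : var) : fo :=
  match I with
  | MVar n => FP n x
  | MBot => FBot
  | MAnd J K => FAnd (ST22 J x) (ST22 K x)
  | MOr J K => FOr (ST22 J x) (ST22 K x)
  | MImp J K =>
      FAll (S x) (FImp (FR x (S x)) (FImp (ST22 J (S x)) (ST22 K (S x))))
  | MBox J =>
      FAll (S x) (FImp (FR x (S x))
        (FAll (S (S x)) (FImp (FRb (S x) (S (S x))) (ST22 J (S (S x))))))
  | MDia J =>
      FAll (S x) (FImp (FR x (S x))
        (FEx (S (S x)) (FAnd (FRd (S x) (S (S x))) (ST22 J (S (S x))))))
  end.

(* A (resp. B) subset of (U1 x U2) u (U2 x U1) is represented by its two
   components Aij : Ui -> Uj -> Prop and Aji : Uj -> Ui -> Prop.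
   Theta (beyond R, R_Box, R_Dia) is given by the set of indices n with P_n in Theta. *)
Definition asim_dir (Theta : nat -> Prop) (Mi Mj : model)
  (Aij : U Mi -> U Mj -> Prop) (Aji : U Mj -> U Mi -> Prop)
  (Bij : U Mi -> U Mj -> Prop) : Prop :=
  (forall n a b, Theta n -> Aij a b -> iP Mi n a -> iP Mj n b) /\
  (forall a b d, Aij a b -> iR Mj b d ->
     exists c, iR Mi a c /\ Aij c d /\ Aji d c) /\
  (forall a b d f, Aij a b -> iR Mj b d -> iRb Mj d f ->
     exists c e, iR Mi a c /\ iRb Mi c e /\ Aij e f) /\
  (forall a b d, Aij a b -> iR Mj b d ->
     exists c, iR Mi a c /\ Bij c d) /\
  (forall a b c, Bij a b -> iRd Mi a c ->
     exists d, iRd Mj b d /\ Aij c d).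

Definition asim22 (Theta : nat -> Prop) (M1 M2 : model) (t : U M1) (u : U M2)
  (A12 : U M1 -> U M2 -> Prop) (A21 : U M2 -> U M1 -> Prop)
  (B12 : U M1 -> U M2 -> Prop) (B21 : U M2 -> U M1 -> Prop) : Prop :=
  A12 t u /\
  asim_dir Theta M1 M2 A12 A21 B12 /\
  asim_dir Theta M2 M1 A21 A12 B21.

Definition invariant22 (f : fo) (x : var) : Prop :=
  forall (Theta : nat -> Prop),
    (forall n, occurs_P n f -> Theta n) ->
    forall (M1 M2 : model) (t : U M1) (u : U M2) A12 A21 B12 B21,
      asim22 Theta M1 M2 t u A12 A21 B12 B21 ->
      forall (a : U M1) (b : U M2), A12 a b ->
        holds_at M1 f x a -> holds_at M2 f x b.

Definition log_equiv (f g : fo) : Prop :=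
  forall (M : model) (h : var -> U M), sat M h f <-> sat M h g.

(* Main.v *)
Require Import Defs.
Module UFM.
From mathcomp Require Import all_boot.
From mathcomp Require Import boolp classical_sets filter.

Lemma uf_exists : exists F : (nat -> Prop) -> Prop,
  F (fun _ => True) /\ ~ F (fun _ => False) /\
  (forall A B, F A -> F B -> F (fun n => A n /\ B n)) /\
  (forall A B : nat -> Prop, F A -> (forall n, A n -> B n) -> F B) /\
  (forall A, F A \/ F (fun n => ~ A n)) /\
  (forall k, F (fun n => Peano.le k n)).
Proof.
have [G [GU sub]] := ultraFilterLemma eventually_filter.
exists G; split; first exact: filterT.
split; first exact: filter_not_empty.
split; first by move=> A B; exact: filterI.
split; first by move=> A B FA AB; apply: filterS FA.
split; first by move=> A; exact: in_ultra_setVsetC.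
move=> k; apply: sub; exists k => // n /=; exact: elimT leP.
Qed.
End UFM.

From Stdlib Require Import Arith Lia Classical ClassicalEpsilon FunctionalExtensionality Cantor Setoid.

Lemma upd_eq {M} (g : var -> U M) v a : update g v a v = a.
Proof. unfold update. rewrite Nat.eqb_refl. reflexivity. Qed.
Lemma upd_neq {M} (g : var -> U M) v a w : w <> v -> update g v a w = g w.
Proof. intro H. unfold update. apply Nat.eqb_neq in H. rewrite H. reflexivity. Qed.

Lemma coinc M f : forall g h : var -> U M,
  (forall v, free_in v f -> g v = h v) -> (sat M g f <-> sat M h f).
Proof.
induction f; intros g h E; simpl in *.
- rewrite (E v (or_introl eq_refl)), (E v0 (or_intror eq_refl)); tauto.
- rewrite (E v (or_introl eq_refl)), (E v0 (or_intror eq_refl)); tauto.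
- rewrite (E v (or_introl eq_refl)), (E v0 (or_intror eq_refl)); tauto.
- rewrite (E v eq_refl); tauto.
- tauto.
- tauto.
- rewrite (IHf g h E); tauto.
- rewrite (IHf1 g h), (IHf2 g h) by (intros; apply E; auto); tauto.
- rewrite (IHf1 g h), (IHf2 g h) by (intros; apply E; auto); tauto.
- rewrite (IHf1 g h), (IHf2 g h) by (intros; apply E; auto); tauto.
- assert (K : forall a, sat M (update g v a) f <-> sat M (update h v a) f).
  { intro a. apply IHf. intros w Hw. unfold update. destruct (Nat.eqb w v) eqn:Ew; auto.
    apply E. split; auto. apply Nat.eqb_neq; auto. }
  split; intros H a; [apply (proj1 (K a)) | apply (proj2 (K a))]; apply H.
- assert (K : forall a, sat M (update g v a) f <-> sat M (update h v a) f).
  { intro a. apply IHf. intros w Hw. unfold update. destruct (Nat.eqb w v) eqn:Ew; auto.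
    apply E. split; auto. apply Nat.eqb_neq; auto. }
  split; intros [a H]; exists a; [apply (proj1 (K a)) | apply (proj2 (K a))]; apply H.
Qed.

Lemma sat_ext M f (g h : var -> U M) : (forall v, g v = h v) -> (sat M g f <-> sat M h f).
Proof. intro E. apply coinc. intros; apply E. Qed.

Fixpoint ev (M : model) (I : mi) (w : U M) : Prop :=
  match I with
  | MVar n => iP M n w
  | MBot => False
  | MAnd J K => ev M J w /\ ev M K w
  | MOr J K => ev M J w \/ ev M K w
  | MImp J K => forall v, iR M w v -> ev M J v -> ev M K v
  | MBox J => forall v, iR M w v -> forall u, iRb M v u -> ev M J u
  | MDia J => forall v, iR M w v -> exists u, iRd M v u /\ ev M J u
  end.

Lemma st_ev M I : forall x (g : var -> U M), sat M g (ST22 I x) <-> ev M I (g x).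
Proof.
induction I; intros x g; simpl.
- tauto.
- tauto.
- rewrite IHI1, IHI2; tauto.
- rewrite IHI1, IHI2; tauto.
- assert (Hx : forall a, update g (S x) a x = g x) by (intro; apply upd_neq; lia).
  setoid_rewrite IHI1. setoid_rewrite IHI2. setoid_rewrite upd_eq. setoid_rewrite Hx. tauto.
- assert (Hx : forall a, update g (S x) a x = g x) by (intro; apply upd_neq; lia).
  assert (Hx2 : forall a b, update (update g (S x) a) (S (S x)) b (S x) = a)
    by (intros; rewrite upd_neq by lia; apply upd_eq).
  setoid_rewrite IHI. setoid_rewrite upd_eq. setoid_rewrite Hx2. setoid_rewrite Hx. tauto.
- assert (Hx : forall a, update g (S x) a x = g x) by (intro; apply upd_neq; lia).
  assert (Hx2 : forall a b, update (update g (S x) a) (S (S x)) b (S x) = a)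
    by (intros; rewrite upd_neq by lia; apply upd_eq).
  setoid_rewrite IHI. setoid_rewrite upd_eq. setoid_rewrite Hx2. setoid_rewrite Hx. tauto.
Qed.
Lemma choice_fun (T : nat -> Type) (inh : forall n, T n) (P : forall n, T n -> Prop) :
  exists f : (forall n, T n), forall n, (exists a, P n a) -> P n (f n).
Proof.
assert (H : forall n, exists a : T n, (exists b, P n b) -> P n a).
{ intro n. destruct (classic (exists b, P n b)) as [[b Hb]|Hn].
  - exists b; auto.
  - exists (inh n); intro C; contradiction. }
exists (fun n => proj1_sig (constructive_indefinite_description _ (H n))).
intro n. exact (proj2_sig (constructive_indefinite_description _ (H n))).
Qed.

Fixpoint dec (fuel n : nat) : mi :=
  match fuel with
  | 0 => MBot
  | S f =>
    match Cantor.of_nat n with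
    | (0, r) => MVar r
    | (1, r) => MBot
    | (2, r) => let (a, b) := Cantor.of_nat r in MAnd (dec f a) (dec f b)
    | (3, r) => let (a, b) := Cantor.of_nat r in MOr (dec f a) (dec f b)
    | (4, r) => let (a, b) := Cantor.of_nat r in MImp (dec f a) (dec f b)
    | (5, r) => MBox (dec f r)
    | (_, r) => MDia (dec f r)
    end
  end.

Lemma dec_surj I : exists n f0, forall f, f0 <= f -> dec f n = I.
Proof.
induction I.
- exists (Cantor.to_nat (0, n)), 1. intros f Hf. destruct f; [lia|].
  cbn [dec]. rewrite Cantor.cancel_of_to. reflexivity.
- exists (Cantor.to_nat (1, 0)), 1. intros f Hf. destruct f; [lia|].
  cbn [dec]. rewrite Cantor.cancel_of_to. reflexivity.
- destruct IHI1 as [n1 [f1 H1]]; destruct IHI2 as [n2 [f2 H2]].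
  exists (Cantor.to_nat (2, Cantor.to_nat (n1, n2))), (S (max f1 f2)).
  intros f Hf. destruct f; [lia|]. cbn [dec]. rewrite !Cantor.cancel_of_to.
  rewrite H1, H2 by lia. reflexivity.
- destruct IHI1 as [n1 [f1 H1]]; destruct IHI2 as [n2 [f2 H2]].
  exists (Cantor.to_nat (3, Cantor.to_nat (n1, n2))), (S (max f1 f2)).
  intros f Hf. destruct f; [lia|]. cbn [dec]. rewrite !Cantor.cancel_of_to.
  rewrite H1, H2 by lia. reflexivity.
- destruct IHI1 as [n1 [f1 H1]]; destruct IHI2 as [n2 [f2 H2]].
  exists (Cantor.to_nat (4, Cantor.to_nat (n1, n2))), (S (max f1 f2)).
  intros f Hf. destruct f; [lia|]. cbn [dec]. rewrite !Cantor.cancel_of_to.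
  rewrite H1, H2 by lia. reflexivity.
- destruct IHI as [n1 [f1 H1]].
  exists (Cantor.to_nat (5, n1)), (S f1).
  intros f Hf. destruct f; [lia|]. cbn [dec]. rewrite !Cantor.cancel_of_to.
  rewrite H1 by lia. reflexivity.
- destruct IHI as [n1 [f1 H1]].
  exists (Cantor.to_nat (6, n1)), (S f1).
  intros f Hf. destruct f; [lia|]. cbn [dec]. rewrite !Cantor.cancel_of_to.
  rewrite H1 by lia. reflexivity.
Qed.

Definition enum (m : nat) : mi := let (a, b) := Cantor.of_nat m in dec a b.

Lemma enum_surj I : exists m, enum m = I.
Proof.
destruct (dec_surj I) as [n [f0 H]]. exists (Cantor.to_nat (f0, n)).
unfold enum. rewrite Cantor.cancel_of_to. apply H; lia.
Qed.

Definition Top : mi := MImp MBot MBot.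

Definition selC (Q : nat -> Prop) (i : nat) : mi :=
  if excluded_middle_informative (Q i) then enum i else Top.
Fixpoint bigC (Q : nat -> Prop) (k : nat) : mi :=
  match k with 0 => selC Q 0 | S k' => MAnd (bigC Q k') (selC Q (S k')) end.
Definition selD (Q : nat -> Prop) (i : nat) : mi :=
  if excluded_middle_informative (Q i) then enum i else MBot.
Fixpoint bigD (Q : nat -> Prop) (k : nat) : mi :=
  match k with 0 => selD Q 0 | S k' => MOr (bigD Q k') (selD Q (S k')) end.

Lemma ev_bigC M Q k w : ev M (bigC Q k) w <-> forall i, i <= k -> Q i -> ev M (enum i) w.
Proof.
induction k; simpl.
- unfold selC. destruct (excluded_middle_informative (Q 0)).
  + split; intros H. intros i Hi Hq. assert (i = 0) by lia; subst; auto. apply H; auto.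
  + split; intros H. intros i Hi Hq. assert (i = 0) by lia; subst; contradiction.
    simpl; intros; contradiction.
- rewrite IHk. unfold selC. destruct (excluded_middle_informative (Q (S k))).
  + split.
    * intros [H1 H2] i Hi Hq. destruct (Nat.eq_dec i (S k)); [subst; auto| apply H1; auto; lia].
    * intros H; split; [intros; apply H; auto; lia | apply H; auto].
  + split.
    * intros [H1 _] i Hi Hq. destruct (Nat.eq_dec i (S k)); [subst; contradiction| apply H1; auto; lia].
    * intros H; split; [intros; apply H; auto; lia | simpl; intros; contradiction].
Qed.

Lemma ev_bigD M Q k w : ev M (bigD Q k) w <-> exists i, i <= k /\ Q i /\ ev M (enum i) w.
Proof.
induction k; simpl.
- unfold selD. destruct (excluded_middle_informative (Q 0)).
  + split; intros H. exists 0; auto. destruct H as [i [Hi [Hq He]]]. assert (i = 0) by lia; subst; auto.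
  + split; intros H. contradiction. destruct H as [i [Hi [Hq He]]]. assert (i = 0) by lia; subst; contradiction.
- rewrite IHk. unfold selD. destruct (excluded_middle_informative (Q (S k))).
  + split.
    * intros [[i [Hi H]]|H]. exists i; split; auto; lia. exists (S k); auto.
    * intros [i [Hi [Hq He]]]. destruct (Nat.eq_dec i (S k)); [subst; auto| left; exists i; split; auto; lia].
  + split.
    * intros [[i [Hi H]]|H]. exists i; split; auto; lia. contradiction.
    * intros [i [Hi [Hq He]]]. destruct (Nat.eq_dec i (S k)); [subst; contradiction| left; exists i; split; auto; lia].
Qed.

Definition isUF (F : (nat -> Prop) -> Prop) : Prop :=
  F (fun _ => True) /\ ~ F (fun _ => False) /\
  (forall A B, F A -> F B -> F (fun n => A n /\ B n)) /\
  (forall A B : nat -> Prop, F A -> (forall n, A n -> B n) -> F B) /\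
  (forall A, F A \/ F (fun n => ~ A n)) /\
  (forall k, F (fun n => Peano.le k n)).

Section UP.
Variable F : (nat -> Prop) -> Prop.
Hypothesis HF : isUF F.

Definition UPm (Ms : nat -> model) : model :=
  {| U := forall n, U (Ms n);
     pt := fun n => pt (Ms n);
     iR := fun a b => F (fun n => iR (Ms n) (a n) (b n));
     iRb := fun a b => F (fun n => iRb (Ms n) (a n) (b n));
     iRd := fun a b => F (fun n => iRd (Ms n) (a n) (b n));
     iP := fun k a => F (fun n => iP (Ms n) k (a n)) |}.

Lemma F_ext A B : (forall n, A n <-> B n) -> (F A <-> F B).
Proof.
destruct HF as [FT [F0 [FI [FS [FU Fcof]]]]].
intro H; split; intro HA; apply (FS _ _ HA); intros n; apply H.
Qed.

Lemma los Ms : forall f (g : var -> U (UPm Ms)),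
  sat (UPm Ms) g f <-> F (fun n => sat (Ms n) (fun v => g v n) f).
Proof.
destruct HF as [FT [F0 [FI [FS [FU Fcof]]]]].
induction f; intros g; simpl.
- reflexivity.
- reflexivity.
- reflexivity.
- reflexivity.
- split; [tauto | intro H; apply F0; exact H].
- split; [intros _; exact FT | auto].
- rewrite IHf. split.
  + intro H. destruct (FU (fun n => sat (Ms n) (fun v => g v n) f)); [contradiction|assumption].
  + intros H1 H2. apply F0. apply (FS _ _ (FI _ _ H1 H2)). intros n [a b]; contradiction.
- rewrite IHf1, IHf2. split.
  + intros [H1 H2]. exact (FI _ _ H1 H2).
  + intro H; split; apply (FS _ _ H); intros n [a b]; assumption.
- rewrite IHf1, IHf2. split.
  + intros [H|H]; apply (FS _ _ H); auto.
  + intro H. destruct (FU (fun n => sat (Ms n) (fun v => g v n) f1)) as [H1|H1]; [left; auto|right].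
    apply (FS _ _ (FI _ _ H H1)). intros n [[a|a] b]; [contradiction|assumption].
- rewrite IHf1, IHf2. split.
  + intro H. destruct (FU (fun n => sat (Ms n) (fun v => g v n) f1)) as [H1|H1].
    * apply (FS _ _ (H H1)). auto.
    * apply (FS _ _ H1). intros n a b; contradiction.
  + intros H H1. apply (FS _ _ (FI _ _ H H1)). intros n [a b]; auto.
- assert (K : forall a, sat (UPm Ms) (update g v a) f <->
     F (fun n => sat (Ms n) (update (fun w => g w n) v (a n)) f)).
  { intro a. rewrite IHf. apply F_ext. intro n. apply sat_ext. intro w.
    unfold update. destruct (Nat.eqb w v); reflexivity. }
  split.
  + intro H. destruct (FU (fun n => forall a, sat (Ms n) (update (fun w => g w n) v a) f))
      as [HA|HN]; [exact HA|exfalso].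
    destruct (choice_fun (fun n => U (Ms n)) (fun n => pt (Ms n))
       (fun n a => ~ sat (Ms n) (update (fun w => g w n) v a) f)) as [a Ha].
    apply F0. apply (FS _ _ (FI _ _ HN (proj1 (K a) (H a)))).
    intros n [H1 H2]. apply (Ha n (not_all_ex_not _ _ H1) H2).
  + intros HA a. apply K. apply (FS _ _ HA). intros n Hn. apply Hn.
- assert (K : forall a, sat (UPm Ms) (update g v a) f <->
     F (fun n => sat (Ms n) (update (fun w => g w n) v (a n)) f)).
  { intro a. rewrite IHf. apply F_ext. intro n. apply sat_ext. intro w.
    unfold update. destruct (Nat.eqb w v); reflexivity. }
  split.
  + intros [a Ha]. apply K in Ha. apply (FS _ _ Ha). intros n Hn. exists (a n). exact Hn.
  + intro HA. destruct (choice_fun (fun n => U (Ms n)) (fun n => pt (Ms n))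
       (fun n a => sat (Ms n) (update (fun w => g w n) v a) f)) as [a Ha].
    exists a. apply K. apply (FS _ _ HA). intros n Hn. apply Ha, Hn.
Qed.

Lemma F_all_le (P : nat -> nat -> Prop) k :
  (forall i, i <= k -> F (P i)) -> F (fun n => forall i, i <= k -> P i n).
Proof.
destruct HF as [FT [F0 [FI [FS [FU Fcof]]]]].
induction k; intros H.
- apply (FS _ _ (H 0 (le_n 0))). intros n Hn i Hi. assert (i = 0) by lia. subst; exact Hn.
- apply (FS _ _ (FI _ _ (IHk (fun i Hi => H i (le_S _ _ Hi))) (H (S k) (le_n _)))).
  intros n [H1 H2] i Hi. destruct (Nat.eq_dec i (S k)). subst; auto. apply H1; lia.
Qed.

Lemma saturation Ms (psi : nat -> fo) (g : var -> U (UPm Ms)) (x : var) :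
  (forall k, exists g' : var -> U (UPm Ms), g' x = g x /\
       forall i, i <= k -> sat (UPm Ms) g' (psi i)) ->
  exists g' : var -> U (UPm Ms), g' x = g x /\ forall k, sat (UPm Ms) g' (psi k).
Proof.
intro Hk.
pose (X := fun k n => exists h : var -> U (Ms n), h x = g x n /\
             forall i, i <= k -> sat (Ms n) h (psi i)).
assert (HX : forall k, F (X k)).
{ destruct HF as [FT [F0 [FI [FS [FU Fcof]]]]].
  intro k. destruct (Hk k) as [g' [E Hg']].
  assert (H1 := F_all_le (fun i n => sat (Ms n) (fun v => g' v n) (psi i)) k
                  (fun i Hi => proj1 (los Ms (psi i) g') (Hg' i Hi))).
  apply (FS _ _ H1). intros n Hn. exists (fun v => g' v n). split.
  simpl. rewrite E. reflexivity. exact Hn. }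
assert (Hex : forall n j, exists h : var -> U (Ms n), h x = g x n /\
   forall k, k <= j -> X k n -> forall i, i <= k -> sat (Ms n) h (psi i)).
{ intros n j. induction j.
  - destruct (classic (X 0 n)) as [[h [E Hh]]|HN].
    + exists h. split; auto. intros k Hk0 _ i Hi. apply Hh; lia.
    + exists (fun _ => g x n). split; auto. intros k Hk0 Hx. assert (k = 0) by lia. subst. contradiction.
  - destruct (classic (X (S j) n)) as [[h [E Hh]]|HN].
    + exists h. split; auto. intros k Hk0 _ i Hi. apply Hh; lia.
    + destruct IHj as [h [E Hh]]. exists h. split; auto. intros k Hk0 Hxk. apply Hh; auto.
      destruct (Nat.eq_dec k (S j)); [subst; contradiction | lia]. }
destruct (choice_fun (fun n => var -> U (Ms n)) (fun n _ => pt (Ms n))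
  (fun n h => h x = g x n /\ forall k, k <= n -> X k n -> forall i, i <= k -> sat (Ms n) h (psi i)))
  as [hs Hhs].
exists (fun v n => hs n v). split.
- apply functional_extensionality_dep. intro n. destruct (Hhs n (Hex n n)) as [E _]. exact E.
- destruct HF as [FT [F0 [FI [FS [FU Fcof]]]]].
  intro k. apply los. apply (FS _ _ (FI _ _ (HX k) (Fcof k))). intros n [H1 H2].
  destruct (Hhs n (Hex n n)) as [_ H]. exact (H k H2 H1 k (le_n k)).
Qed.

Lemma compact Ms (gs : forall n, var -> U (Ms n)) (psi : nat -> fo) :
  (forall n i, i <= n -> sat (Ms n) (gs n) (psi i)) ->
  forall k, sat (UPm Ms) (fun v n => gs n v) (psi k).
Proof.
destruct HF as [FT [F0 [FI [FS [FU Fcof]]]]].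
intros H k. apply los. apply (FS _ _ (Fcof k)). intros n Hn. exact (H n k Hn).
Qed.

End UP.

Definition incl (M1 M2 : model) (a : U M1) (b : U M2) : Prop :=
  forall I, ev M1 I a -> ev M2 I b.
Definition Bd (M1 M2 : model) (a : U M1) (b : U M2) : Prop :=
  forall J, (exists z, iRd M1 a z /\ ev M1 J z) -> exists z', iRd M2 b z' /\ ev M2 J z'.

Section AS.
Variable F : (nat -> Prop) -> Prop.
Hypothesis HF : isUF F.

Lemma asim_UP (Theta : nat -> Prop) Ms1 Ms2 :
  asim_dir Theta (UPm F Ms1) (UPm F Ms2) (incl _ _) (incl _ _) (Bd _ _).
Proof.
unfold asim_dir; split; [|split;[|split;[|split]]].
- intros n a b _ H Hp. apply (H (MVar n)). exact Hp.
- intros a b d Hab Hbd.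
  pose (Qt := fun i => ev (UPm F Ms2) (enum i) d).
  pose (lit := fun i => if excluded_middle_informative (Qt i) then ST22 (enum i) 1
                        else FNot (ST22 (enum i) 1)).
  pose (psi := fun i => FAnd (FR 0 1) (lit i)).
  assert (Hfin : forall k, exists g' : var -> U (UPm F Ms1), g' 0 = (fun _ : var => a) 0 /\
            forall i, i <= k -> sat (UPm F Ms1) g' (psi i)).
  { intro k. apply NNPP; intro Hn.
    assert (Himp : ev (UPm F Ms1) (MImp (bigC Qt k) (bigD (fun i => ~ Qt i) k)) a).
    { simpl. intros c Hac Hc. apply NNPP; intro Hd. apply Hn.
      exists (update (fun _ => a) 1 c). split; [reflexivity|].
      intros i Hi. unfold psi, lit. simpl. split; [exact Hac|].
      destruct (excluded_middle_informative (Qt i)).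
      - apply st_ev. simpl. rewrite ev_bigC in Hc. apply Hc; auto.
      - intro Hs. apply st_ev in Hs. simpl in Hs. apply Hd. apply ev_bigD. exists i; auto. }
    assert (H2 := Hab _ Himp). simpl in H2. specialize (H2 d Hbd).
    destruct (proj1 (ev_bigD _ _ _ _) (H2 (proj2 (ev_bigC _ _ _ _) (fun i _ q => q))))
      as [i [_ [Hq Hev]]]. contradiction. }
  destruct (saturation F HF Ms1 psi (fun _ => a) 0 Hfin) as [g' [E Hg']].
  simpl in E.
  exists (g' 1). split; [|split].
  + specialize (Hg' 0). unfold psi in Hg'. simpl in Hg'. destruct Hg' as [H _].
    rewrite E in H. exact H.
  + intros I HI. destruct (enum_surj I) as [k Hk]. subst I. specialize (Hg' k).
    unfold psi, lit in Hg'. simpl in Hg'.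
    destruct (excluded_middle_informative (Qt k)) as [q|nq]; [exact q|].
    exfalso. destruct Hg' as [_ H]. apply H. apply st_ev. exact HI.
  + intros I HI. destruct (enum_surj I) as [k Hk]. subst I. specialize (Hg' k).
    unfold psi, lit in Hg'. simpl in Hg'.
    destruct (excluded_middle_informative (Qt k)) as [q|nq]; [|contradiction].
    destruct Hg' as [_ H]. apply st_ev in H. exact H.
- intros a b d f Hab Hbd Hdf.
  pose (Qf := fun i => ~ ev (UPm F Ms2) (enum i) f).
  pose (lit := fun i => if excluded_middle_informative (Qf i) then FNot (ST22 (enum i) 2)
                        else FTop).
  pose (psi := fun i => FAnd (FAnd (FR 0 1) (FRb 1 2)) (lit i)).
  assert (Hfin : forall k, exists g' : var -> U (UPm F Ms1), g' 0 = (fun _ : var => a) 0 /\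
            forall i, i <= k -> sat (UPm F Ms1) g' (psi i)).
  { intro k. apply NNPP; intro Hn.
    assert (Hbox : ev (UPm F Ms1) (MBox (bigD Qf k)) a).
    { simpl. intros c Hac e Hce. apply NNPP; intro Hd. apply Hn.
      exists (update (update (fun _ => a) 1 c) 2 e). split; [reflexivity|].
      intros i Hi. unfold psi, lit. simpl. split; [split; assumption|].
      destruct (excluded_middle_informative (Qf i)).
      - intro Hs. apply st_ev in Hs. simpl in Hs. apply Hd. apply ev_bigD. exists i; auto.
      - exact I. }
    assert (H2 := Hab _ Hbox). simpl in H2. specialize (H2 d Hbd f Hdf).
    destruct (proj1 (ev_bigD _ _ _ _) H2) as [i [_ [Hq Hev]]]. contradiction. }
  destruct (saturation F HF Ms1 psi (fun _ => a) 0 Hfin) as [g' [E Hg']].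
  simpl in E.
  exists (g' 1), (g' 2). split; [|split].
  + specialize (Hg' 0). unfold psi in Hg'. simpl in Hg'. destruct Hg' as [[H _] _].
    rewrite E in H. exact H.
  + specialize (Hg' 0). unfold psi in Hg'. simpl in Hg'. destruct Hg' as [[_ H] _]. exact H.
  + intros I HI. destruct (enum_surj I) as [k Hk]. subst I. specialize (Hg' k).
    unfold psi, lit in Hg'. simpl in Hg'.
    destruct (excluded_middle_informative (Qf k)) as [q|nq]; [|apply NNPP; exact nq].
    exfalso. destruct Hg' as [_ H]. apply H. apply st_ev. exact HI.
- intros a b d Hab Hbd.
  pose (Qf := fun i => ~ exists z', iRd (UPm F Ms2) d z' /\ ev (UPm F Ms2) (enum i) z').
  pose (lit := fun i => if excluded_middle_informative (Qf i)
                        then FNot (FEx 2 (FAnd (FRd 1 2) (ST22 (enum i) 2))) else FTop).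
  pose (psi := fun i => FAnd (FR 0 1) (lit i)).
  assert (Hfin : forall k, exists g' : var -> U (UPm F Ms1), g' 0 = (fun _ : var => a) 0 /\
            forall i, i <= k -> sat (UPm F Ms1) g' (psi i)).
  { intro k. apply NNPP; intro Hn.
    assert (Hdia : ev (UPm F Ms1) (MDia (bigD Qf k)) a).
    { simpl. intros c Hac. apply NNPP; intro Hnd. apply Hn.
      exists (update (fun _ => a) 1 c). split; [reflexivity|].
      intros i Hi. unfold psi, lit. simpl. split; [exact Hac|].
      destruct (excluded_middle_informative (Qf i)).
      - intros [z [Hcz Hz]]. apply st_ev in Hz. simpl in Hz, Hcz. apply Hnd.
        exists z. split; auto. apply ev_bigD. exists i; auto.
      - exact I. }
    assert (H2 := Hab _ Hdia). simpl in H2. destruct (H2 d Hbd) as [z' [Hdz Hz]].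
    destruct (proj1 (ev_bigD _ _ _ _) Hz) as [i [_ [Hq Hev]]]. apply Hq. exists z'; auto. }
  destruct (saturation F HF Ms1 psi (fun _ => a) 0 Hfin) as [g' [E Hg']].
  simpl in E.
  exists (g' 1). split.
  + specialize (Hg' 0). unfold psi in Hg'. simpl in Hg'. destruct Hg' as [H _].
    rewrite E in H. exact H.
  + intros J [z [Hz HJ]]. destruct (enum_surj J) as [k Hk]. subst J. specialize (Hg' k).
    unfold psi, lit in Hg'. simpl in Hg'.
    destruct (excluded_middle_informative (Qf k)) as [q|nq]; [|apply NNPP; exact nq].
    exfalso. destruct Hg' as [_ H]. apply H. exists z. simpl. split; [exact Hz|].
    apply st_ev. exact HJ.
- intros a b c Hab Hac.
  pose (Qt := fun i => ev (UPm F Ms1) (enum i) c).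
  pose (lit := fun i => if excluded_middle_informative (Qt i) then ST22 (enum i) 1 else FTop).
  pose (psi := fun i => FAnd (FRd 0 1) (lit i)).
  assert (Hfin : forall k, exists g' : var -> U (UPm F Ms2), g' 0 = (fun _ : var => b) 0 /\
            forall i, i <= k -> sat (UPm F Ms2) g' (psi i)).
  { intro k. apply NNPP; intro Hn.
    destruct (Hab (bigC Qt k)) as [z' [Hbz Hz]].
    { exists c. split; [exact Hac|]. apply ev_bigC. intros i _ q. exact q. }
    apply Hn. exists (update (fun _ => b) 1 z'). split; [reflexivity|].
    intros i Hi. unfold psi, lit. simpl. split; [exact Hbz|].
    destruct (excluded_middle_informative (Qt i)).
    - apply st_ev. simpl. rewrite ev_bigC in Hz. apply Hz; auto.
    - exact I. }
  destruct (saturation F HF Ms2 psi (fun _ => b) 0 Hfin) as [g' [E Hg']].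
  simpl in E.
  exists (g' 1). split.
  + specialize (Hg' 0). unfold psi in Hg'. simpl in Hg'. destruct Hg' as [H _].
    rewrite E in H. exact H.
  + intros I HI. destruct (enum_surj I) as [k Hk]. subst I. specialize (Hg' k).
    unfold psi, lit in Hg'. simpl in Hg'.
    destruct (excluded_middle_informative (Qt k)) as [q|nq]; [|contradiction].
    destruct Hg' as [_ H]. apply st_ev in H. exact H.
Qed.

End AS.

Theorem lemma8 (phi : fo) (x : var) :
  (forall v, free_in v phi -> v = x) ->
  invariant22 phi x ->
  exists I : mi, log_equiv phi (ST22 I x).
Proof.
intros Hfree Hinv.
destruct UFM.uf_exists as [F HF].
pose (C := fun I => forall M (g : var -> U M), sat M g phi -> ev M I (g x)).
assert (Key : exists k, forall M (g : var -> U M),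
   (forall i, i <= k -> C (enum i) -> ev M (enum i) (g x)) -> sat M g phi).
{ apply NNPP; intro Hno.
  assert (Hk : forall k, exists Mg : {M : model & var -> U M},
     (forall i, i <= k -> C (enum i) -> ev (projT1 Mg) (enum i) (projT2 Mg x)) /\
     ~ sat (projT1 Mg) (projT2 Mg) phi).
  { intro k. apply NNPP; intro H. apply Hno. exists k. intros M g Hg.
    apply NNPP; intro Hs. apply H. exists (existT _ M g). simpl; auto. }
  pose (Mg := fun k => proj1_sig (constructive_indefinite_description _ (Hk k))).
  pose proof (fun k => proj2_sig (constructive_indefinite_description _ (Hk k))) as HMg.
  pose (Ms := fun k => projT1 (Mg k)).
  pose (gs := fun k => projT2 (Mg k) : var -> U (Ms k)).
  pose (psi := fun i => FAnd (FNot phi)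
     (if excluded_middle_informative (C (enum i)) then ST22 (enum i) x else FTop)).
  assert (Hc := compact F HF Ms gs psi).
  pose (G := fun v n => gs n v : U (Ms n)).
  assert (HG : forall k, sat (UPm F Ms) G (psi k)).
  { apply Hc. intros n i Hi. destruct (HMg n) as [H1 H2]. unfold psi. simpl. split.
    - exact H2.
    - destruct (excluded_middle_informative (C (enum i))); [|exact I].
      apply st_ev. apply H1; auto. }
  clear Hc.
  pose (Mstar := UPm F Ms).
  assert (HnotPhi : ~ sat Mstar G phi).
  { specialize (HG 0). unfold psi in HG. simpl in HG. destruct HG as [H _]. exact H. }
  assert (HC : forall I, C I -> ev Mstar I (G x)).
  { intros I HI. destruct (enum_surj I) as [k Hk0]. subst I. specialize (HG k).
    unfold psi in HG. simpl in HG. destruct HG as [_ H].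
    destruct (excluded_middle_informative (C (enum k))); [|contradiction].
    apply st_ev in H. exact H. }
  assert (Hk2 : forall k, exists Nh : {N : model & var -> U N},
      sat (projT1 Nh) (projT2 Nh) phi /\
      forall i, i <= k -> ev (projT1 Nh) (enum i) (projT2 Nh x) -> ev Mstar (enum i) (G x)).
  { intro k. apply NNPP; intro H.
    pose (D := bigD (fun i => ~ ev Mstar (enum i) (G x)) k).
    assert (CD : C D).
    { intros N h Hs. apply NNPP; intro Hnd. apply H. exists (existT _ N h). simpl.
      split; auto. intros i Hi He. apply NNPP; intro Hne. apply Hnd.
      apply ev_bigD. exists i; auto. }
    apply HC in CD. apply ev_bigD in CD. destruct CD as [i [_ [Hn He]]]. contradiction. }
  pose (Nh := fun k => proj1_sig (constructive_indefinite_description _ (Hk2 k))).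
  pose proof (fun k => proj2_sig (constructive_indefinite_description _ (Hk2 k))) as HNh.
  pose (Ns := fun k => projT1 (Nh k)).
  pose (hs := fun k => projT2 (Nh k) : var -> U (Ns k)).
  pose (psi2 := fun i => FAnd phi
     (if excluded_middle_informative (ev Mstar (enum i) (G x)) then FTop
      else FNot (ST22 (enum i) x))).
  assert (Hc := compact F HF Ns hs psi2).
  pose (H := fun v n => hs n v : U (Ns n)).
  assert (HH : forall k, sat (UPm F Ns) H (psi2 k)).
  { apply Hc. intros n i Hi. destruct (HNh n) as [H1 H2]. unfold psi2. simpl. split.
    - exact H1.
    - destruct (excluded_middle_informative (ev Mstar (enum i) (G x))); [exact I|].
      intro Hs. apply st_ev in Hs. apply n0. apply H2; auto. }
  clear Hc.
  pose (Nstar := UPm F Ns).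
  assert (Hphi : sat Nstar H phi).
  { specialize (HH 0). unfold psi2 in HH. simpl in HH. destruct HH as [Hp _]. exact Hp. }
  assert (Hincl : incl Nstar Mstar (H x) (G x)).
  { intros I HI. destruct (enum_surj I) as [k Hk0]. subst I. specialize (HH k).
    unfold psi2 in HH. simpl in HH. destruct HH as [_ Hq].
    destruct (excluded_middle_informative (ev Mstar (enum k) (G x))) as [e|ne]; [exact e|].
    exfalso. apply Hq. apply st_ev. exact HI. }
  assert (Has : asim22 (fun _ => True) Nstar Mstar (H x) (G x)
     (incl _ _) (incl _ _) (Bd _ _) (Bd _ _)).
  { split; [exact Hincl|]. split; apply (asim_UP F HF). }
  assert (Hhold : holds_at Nstar phi x (H x)).
  { intros g' Eg'. refine (proj1 (coinc Nstar phi H g' _) Hphi).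
    intros v Hv. rewrite (Hfree v Hv). symmetry. exact Eg'. }
  assert (Hm := Hinv (fun _ => True) (fun _ _ => I) Nstar Mstar (H x) (G x) _ _ _ _ Has
                 (H x) (G x) Hincl Hhold).
  apply HnotPhi. apply Hm. reflexivity. }
destruct Key as [k Hk].
exists (bigC (fun i => C (enum i)) k).
intros M h. rewrite st_ev. rewrite ev_bigC. split.
- intros Hs i Hi Hc. apply Hc, Hs.
- apply Hk.
Qed.
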